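(* Let $q$ be a prime power and $\mathcal{L}$ a non-empty set of lines of $\mathrm{PG}(n,q)$ satisfying (Pt), (Pl), (Sd) and (To) (see context). Let $M$ be a subspace of $\mathrm{PG}(n,q)$ and let $\ell\in\mathcal{L}$ be a line meeting $M$ in exactly one point. (a) If $\ell$ meets no line of $\mathcal{L}_M$, then $|\mathcal{L}|\ge q|\mathcal{L}_M|+1$. (b) If $\ell$ meets a line $s\in\mathcal{L}_M$ which contains exactly $\alpha$ $(q+1)$-$M$-points, then $|\mathcal{L}|\ge q|\mathcal{L}_M|-\alpha q^2+\alpha q+1\ge q|\mathcal{L}_M|-q^3+q^2+1$.
   Context: (Pt): every point of $\mathrm{PG}(n,q)$ lies on $0$ or $q+1$ lines of $\mathcal{L}$. (Pl): every plane contains $0$, $1$ or $q+1$ lines of $\mathcal{L}$. (Sd): every solid ($3$-dimensional subspace) contains $0$, $1$, $q+1$ or $2q+1$ lines of $\mathcal{L}$. (To): $|\mathcal{L}|\le q^5+q^4+q^3+q^2+q+1$. For a subspace $W$, $\mathcal{L}_W$ denotes the set of lines of $\mathcal{L}$ contained in $W$. A point $P$ is a $(q+1)$-$M$-point if exactly $q+1$ lines of $\mathcal{L}$ pass through $P$ and are contained in $M$. *)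

(* Defs.v *)
From HB Require Import structures.
From mathcomp Require Import all_boot all_order all_algebra all_field.
Set Implicit Arguments. Unset Strict Implicit. Unset Printing Implicit Defensive.
Import GRing.Theory.

(* Projective space PG(n,q) = lattice of subspaces of F^(n+1), F a finite
   field with q elements.  A subspace is represented by its canonical
   row-space matrix <<A>>%MS in 'M[F]_(n.+1); projective dimension d
   corresponds to vector rank d+1. *)

Section PG.
Variables (F : finFieldType) (n : nat).

Definition subspaces_of_rank (r : nat) : {set 'M[F]_(n.+1)} :=
  [set A : 'M[F]_(n.+1) | (<<A>>%MS == A) && (\rank A == r)].

Definition pg_points := subspaces_of_rank 1.
Definition pg_lines  := subspaces_of_rank 2.
Definition pg_planes := subspaces_of_rank 3.
Definition pg_solids := subspaces_of_rank 4.

(* L_W : lines of L contained in W *)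
Definition lines_in (L : {set 'M[F]_(n.+1)}) (W : 'M[F]_(n.+1)) :=
  [set l in L | (l <= W)%MS].

(* lines of L through the point P *)
Definition lines_through (L : {set 'M[F]_(n.+1)}) (P : 'M[F]_(n.+1)) :=
  [set l in L | (P <= l)%MS].

(* P is a (q+1)-M-point: exactly q+1 lines of L pass through P and lie in M *)
Definition qM_point (q : nat) (L : {set 'M[F]_(n.+1)}) (M P : 'M[F]_(n.+1)) :=
  (P \in pg_points) && (#|lines_in (lines_through L P) M| == q.+1).

End PG.

(* Main.v *)
Require Import Defs.
From mathcomp Require Import all_boot all_order all_algebra all_field.
From mathcomp Require Import zify.
Set Implicit Arguments. Unset Strict Implicit. Unset Printing Implicit Defensive.
Ltac keep_ty T := lazymatch T with
  | @eq ?U _ _ => unify U nat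
  | is_true (leq _ _) => idtac
  end.
Ltac clean_ctx := repeat match goal with
  | H := _ |- _ => subst H
  end;
  repeat match goal with
  | H : ?T |- _ => tryif keep_ty T then fail else clear H
  end.
Ltac abs_rank := repeat match goal with H : ?T |- _ => keep_ty T; revert H end;
  repeat match goal with
   | |- context [@mxrank ?F ?m ?n ?A] => let v := fresh "r" in move: (@mxrank F m n A) => v
   | |- context [@card.body ?T ?A] => let v := fresh "c" in move: (@card.body T A) => v
  end;
  intros.
Ltac slia := clean_ctx; abs_rank; lia.

Section Basics.
Variables (F : fieldType) (k : nat).
Local Notation mx := 'M[F]_k.

Lemma rk_cap m1 m2 (A : 'M[F]_(m1,k)) (B : 'M[F]_(m2,k)) :
  \rank (A :&: B)%MS = \rank A + \rank B - \rank (A + B)%MS.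
Proof. have := mxrank_sum_cap A B; lia. Qed.

Lemma rk_sum m1 m2 (A : 'M[F]_(m1,k)) (B : 'M[F]_(m2,k)) :
  \rank (A + B)%MS = \rank A + \rank B - \rank (A :&: B)%MS.
Proof. have := mxrank_sum_cap A B; lia. Qed.

Lemma eq_rk_sub m1 m2 (A : 'M[F]_(m1,k)) (B : 'M[F]_(m2,k)) :
  (A <= B)%MS -> \rank B <= \rank A -> (B <= A)%MS.
Proof. by move=> sAB; rewrite (geq_leqif (mxrank_leqif_sup sAB)). Qed.

Lemma canon_eq (A B : mx) : <<A>>%MS = A -> <<B>>%MS = B ->
  (A <= B)%MS -> \rank B <= \rank A -> A = B.
Proof.
move=> hA hB sAB rBA; rewrite -hA -hB; apply/genmxP.
by rewrite sAB (eq_rk_sub sAB rBA).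
Qed.

Lemma rk_le_sub m1 m2 (A : 'M[F]_(m1,k)) (B : 'M[F]_(m2,k)) :
  (A <= B)%MS -> \rank A <= \rank B.
Proof. exact: mxrankS. Qed.

End Basics.

Lemma sum_fiber (T U : finType) (f : T -> U) (A : {set T}) (B : {set U}) :
  \sum_(S in B) #|[set x in A | f x == S]| = #|[set x in A | f x \in B]|.
Proof.
rewrite -sum1_card (partition_big f (mem B)) /=; last by move=> x; rewrite inE => /andP[].
apply: eq_bigr => S SB; rewrite -sum1_card; apply: eq_bigl => x.
rewrite !inE; case: eqP => [->|]; rewrite ?SB ?andbT ?andbF //.
Qed.

Section More.
Variables (F : fieldType) (k : nat).
Lemma r1_cap0 m1 m2 (X : 'M[F]_(m1,k)) (Y : 'M[F]_(m2,k)) :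
  \rank X = 1 -> ~~ (X <= Y)%MS -> \rank (X :&: Y)%MS = 0.
Proof.
move=> rX nXY; apply/eqP; rewrite -leqn0 leqNgt; apply: contra nXY => h.
have : (X <= X :&: Y)%MS by apply: eq_rk_sub; [exact: capmxSl | rewrite rX].
by move/submx_trans; apply; exact: capmxSr.
Qed.
End More.

Section Count.
Import GRing.Theory.
Variables (F : finFieldType) (n : nat).
Local Notation mx := 'M[F]_(n.+1).

Lemma in_pts (Y : mx) : (Y \in pg_points F n) = (<<Y>>%MS == Y) && (\rank Y == 1).
Proof. by rewrite /pg_points /subspaces_of_rank inE. Qed.
Lemma in_lines (Y : mx) : (Y \in pg_lines F n) = (<<Y>>%MS == Y) && (\rank Y == 2).
Proof. by rewrite /pg_lines /subspaces_of_rank inE. Qed.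
Lemma in_planes (Y : mx) : (Y \in pg_planes F n) = (<<Y>>%MS == Y) && (\rank Y == 3).
Proof. by rewrite /pg_planes /subspaces_of_rank inE. Qed.
Lemma in_solids (Y : mx) : (Y \in pg_solids F n) = (<<Y>>%MS == Y) && (\rank Y == 4).
Proof. by rewrite /pg_solids /subspaces_of_rank inE. Qed.

(* a nonzero row of a nonzero matrix spans it when rank 1 *)
Lemma rank1_row m (Y : 'M[F]_(m, n.+1)) : \rank Y = 1 ->
  exists y : 'rV[F]_(n.+1), [/\ y != 0%R, (y <= Y)%MS & (Y <= y)%MS].
Proof.
move=> rY.
have : ~~ (Y <= (0%R : 'M_(n.+1)))%MS.
  by rewrite submx0 -mxrank_eq0 rY.
case/row_subPn=> i hi; exists (row i Y).
have nz : row i Y != 0%R by apply: contraNneq hi => ->; rewrite sub0mx.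
split=> //; first exact: row_sub.
by apply: eq_rk_sub; [exact: row_sub | rewrite rY rank_rV nz].
Qed.

Lemma pts_on_line (r : mx) (q : nat) : #|F| = q -> \rank r = 2 ->
  #|[set Y in pg_points F n | (Y <= r)%MS]| <= q.+1.
Proof.
move=> hq rr.
have [u [nzu ur _]] : exists u : 'rV[F]_(n.+1), [/\ u != 0%R, (u <= r)%MS & true].
  have : ~~ (r <= (0%R : 'M_(n.+1)))%MS by rewrite submx0 -mxrank_eq0 rr.
  case/row_subPn=> i hi; exists (row i r); split=> //; last exact: row_sub.
  by apply: contraNneq hi => ->; rewrite sub0mx.
have : ~~ (r <= u)%MS.
  apply/negP=> /mxrankS; rewrite rr rank_rV nzu //.
case/row_subPn=> i hi; set w := row i r in hi.
have wr : (w <= r)%MS by exact: row_sub.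
have nzw : w != 0%R by apply: contraNneq hi => ->; rewrite sub0mx.
have ruw : \rank (u + w)%MS = 2.
  rewrite rk_sum !rank_rV nzu nzw.
  suff -> : \rank (u :&: w)%MS = 0 by [].
  have [//|h0] := eqVneq (\rank (u :&: w)%MS) 0.
  have h1 : \rank (u :&: w)%MS = 1.
    have := rk_le_sub (capmxSr u w); rewrite rank_rV nzw /=.
    lia.
  have : (w <= u :&: w)%MS by apply: eq_rk_sub; [exact: capmxSr | rewrite h1 rank_rV nzw].
  by move=> /submx_trans /(_ (capmxSl u w)); rewrite (negbTE hi).
have ruw_r : (r <= u + w)%MS.
  by apply: eq_rk_sub; [rewrite addsmx_sub ur wr | rewrite ruw rr].
pose g (o : option F) : mx := if o is Some c then <<u + c *: w>>%MS else <<w>>%MS.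
have sub : [set Y in pg_points F n | (Y <= r)%MS] \subset g @: [set: option F].
  apply/subsetP=> Y; rewrite inE in_pts => /andP[/andP[/eqP cY /eqP rY] Yr].
  have [y [nzy yY Yy]] := rank1_row rY.
  have eY : Y = <<y>>%MS by rewrite -cY; apply/genmxP; rewrite yY Yy.
  have : (y <= u + w)%MS by apply: submx_trans ruw_r; apply: submx_trans Yr.
  case/sub_addsmxP=> [[c1 c2] /= ey].
  have [a ea] : exists a, (c1 *m u = a *: u)%R by apply/sub_rVP; exact: submxMl.
  have [b eb] : exists b, (c2 *m w = b *: w)%R by apply/sub_rVP; exact: submxMl.
  rewrite ea eb in ey.
  have [a0|an0] := eqVneq a 0%R.
    apply/imsetP; exists None; rewrite ?in_setT //=; rewrite eY; apply: eq_genmx.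
    rewrite ey a0 scale0r add0r; apply: eqmx_scale.
    by apply: contraNneq nzy => b0; rewrite ey a0 b0 !scale0r addr0.
  apply/imsetP; exists (Some (b / a)%R); rewrite ?in_setT //=; rewrite eY; apply: eq_genmx.
  have -> : y = (a *: (u + (b / a) *: w))%R.
    by rewrite ey scalerDr scalerA mulrCA divff // mulr1.
  exact: eqmx_scale.
apply: leq_trans (subset_leq_card sub) _.
by apply: leq_trans (leq_imset_card _ _) _; rewrite cardsT card_option hq.
Qed.

End Count.

Section Main.
Variables (F : finFieldType) (n q : nat) (hq : #|F| = q).
Local Notation mx := 'M[F]_(n.+1).
Variables (L : {set mx}) (Lsub : L \subset pg_lines F n).
Hypothesis Pt : forall P, P \in pg_points F n ->
          #|lines_through L P| = 0 \/ #|lines_through L P| = q.+1.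
Hypothesis Pl : forall W, W \in pg_planes F n ->
          #|lines_in L W| \in [:: 0; 1; q.+1].
Hypothesis Sd : forall W, W \in pg_solids F n ->
          #|lines_in L W| \in [:: 0; 1; q.+1; (2 * q).+1].

Lemma q2 : 1 < q.
Proof.
rewrite -hq; have := subset_leq_card (subsetT [set (0 : F)%R; 1%R]).
by rewrite cards2 eq_sym GRing.oner_neq0 cardsT.
Qed.

Lemma lineL x : x \in L -> <<x>>%MS = x /\ \rank x = 2.
Proof. by move=> /(subsetP Lsub); rewrite in_lines => /andP[/eqP -> /eqP ->]. Qed.

Lemma linesE (W : mx) : lines_in L W = lines_in L <<W>>%MS.
Proof. by apply/setP=> t; rewrite !inE genmxE. Qed.

Lemma Pt' (X : mx) : \rank X = 1 ->
  #|[set t in L | (X <= t)%MS]| = 0 \/ #|[set t in L | (X <= t)%MS]| = q.+1.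
Proof.
move=> rX; have -> : [set t in L | (X <= t)%MS] = lines_through L <<X>>%MS.
  by apply/setP=> t; rewrite !inE genmxE.
by apply: Pt; rewrite in_pts genmx_id mxrank_gen rX !eqxx.
Qed.

Lemma Pt1 (X x : mx) : \rank X = 1 -> x \in L -> (X <= x)%MS ->
  #|[set t in L | (X <= t)%MS]| = q.+1.
Proof.
move=> rX xL Xx; case: (Pt' rX) => // h0.
have : 0 < #|[set t in L | (X <= t)%MS]| by apply/card_gt0P; exists x; rewrite inE xL Xx.
by rewrite h0.
Qed.

Lemma Pl' (W : mx) : \rank W = 3 -> #|lines_in L W| \in [:: 0; 1; q.+1].
Proof. by move=> rW; rewrite linesE; apply: Pl; rewrite in_planes genmx_id mxrank_gen rW !eqxx. Qed.

Lemma Sd' (W : mx) : \rank W = 4 -> #|lines_in L W| <= (2 * q).+1.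
Proof.
move=> rW; have := Sd (W := <<W>>%MS); rewrite in_solids genmx_id mxrank_gen rW !eqxx -linesE.
move=> /(_ isT); rewrite !inE => /or4P[] /eqP ->; slia.
Qed.

Lemma Sd2 (W : mx) : \rank W = 4 -> 1 < #|lines_in L W| -> q.+1 <= #|lines_in L W|.
Proof.
move=> rW; have := Sd (W := <<W>>%MS); rewrite in_solids genmx_id mxrank_gen rW !eqxx -linesE.
move=> /(_ isT); rewrite !inE => /or4P[] /eqP ->; slia.
Qed.

Lemma Sd3 (W : mx) : \rank W = 4 -> q.+1 < #|lines_in L W| -> #|lines_in L W| = (2 * q).+1.
Proof.
move=> rW; have := Sd (W := <<W>>%MS); rewrite in_solids genmx_id mxrank_gen rW !eqxx -linesE.
move=> /(_ isT); rewrite !inE => /or4P[] /eqP ->; slia.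
Qed.

Lemma card2_sub (A : {set mx}) a b : a \in A -> b \in A -> a != b -> 1 < #|A|.
Proof.
move=> aA bA ab; have := subset_leq_card (_ : [set a; b] \subset A).
rewrite cards2 ab; apply; apply/subsetP=> x; rewrite !inE => /orP[] /eqP ->//.
Qed.

Lemma Pl2 (W a b : mx) : \rank W = 3 -> a \in L -> b \in L -> a != b ->
  (a <= W)%MS -> (b <= W)%MS -> #|lines_in L W| = q.+1.
Proof.
move=> rW aL bL ab aW bW.
have h2 : 1 < #|lines_in L W| by apply: (card2_sub (a:=a) (b:=b)); rewrite ?inE ?aL ?bL.
by have := Pl' rW; rewrite !inE => /or3P[] /eqP h; rewrite h in h2 *.
Qed.

Lemma line_neq_sub x a : x \in L -> a \in L -> x != a -> ~~ (x <= a)%MS.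
Proof.
move=> xL aL; apply: contra => xa; apply/eqP; have [cx rx] := lineL xL; have [ca ra] := lineL aL.
by apply: canon_eq => //; rewrite ra rx.
Qed.

Lemma line_uniq x a (Z : mx) : x \in L -> a \in L -> \rank Z <= 2 ->
  (x <= Z)%MS -> (a <= Z)%MS -> x = a.
Proof.
move=> xL aL rZ xZ aZ; have [cx rx] := lineL xL; have [ca ra] := lineL aL.
have Za : (Z <= a)%MS by apply: eq_rk_sub => //; rewrite ra.
apply: canon_eq => //; last by rewrite ra rx.
exact: submx_trans xZ Za.
Qed.

Lemma cap_line_le1 t (Y : mx) : t \in L -> ~~ (t <= Y)%MS -> \rank (t :&: Y)%MS <= 1.
Proof.
move=> tL; apply: contraR; rewrite -ltnNge => h; have [_ rt] := lineL tL.
have : (t <= t :&: Y)%MS by apply: eq_rk_sub; [exact: capmxSl | rewrite rt].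
by move/submx_trans; apply; exact: capmxSr.
Qed.

Lemma cap_ge1 (X A B : mx) : \rank X = 1 -> (X <= A)%MS -> (X <= B)%MS -> 1 <= \rank (A :&: B)%MS.
Proof. by move=> rX XA XB; rewrite -rX; apply: mxrankS; rewrite sub_capmx XA XB. Qed.


Lemma two_lines_rank a b (X : mx) : a \in L -> b \in L -> a != b ->
  \rank X = 1 -> (X <= a)%MS -> (X <= b)%MS ->
  \rank (a :&: b)%MS = 1 /\ \rank (a + b)%MS = 3.
Proof.
move=> aL bL ab rX Xa Xb; have [_ ra] := lineL aL; have [_ rb] := lineL bL.
have h1 := cap_ge1 rX Xa Xb; have h2 := cap_line_le1 aL (line_neq_sub aL bL ab).
have := rk_sum a b; rewrite ra rb; slia.
Qed.

Lemma pen (W X a b t : mx) : \rank W = 3 -> a \in L -> b \in L -> a != b ->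
  (a <= W)%MS -> (b <= W)%MS -> \rank X = 1 -> (X <= a)%MS -> (X <= b)%MS ->
  t \in L -> (X <= t)%MS -> ~~ (t <= W)%MS -> False.
Proof.
move=> rW aL bL ab aW bW rX Xa Xb tL Xt tW.
have [_ ra] := lineL aL; have [_ rb] := lineL bL; have [_ rt] := lineL tL.
have XW : (X <= W)%MS by exact: submx_trans Xa aW.
have rS : \rank (t + W)%MS = 4.
  have := cap_ge1 rX Xt XW; have := cap_line_le1 tL tW; have := rk_sum t W.
  rewrite rt rW; slia.
have ta : t != a by apply: contraNneq tW => ->.
have tb : t != b by apply: contraNneq tW => ->.
have [_ rsa] := two_lines_rank tL aL ta rX Xt Xa.
have [_ rsb] := two_lines_rank tL bL tb rX Xt Xb.
have [_ rab] := two_lines_rank aL bL ab rX Xa Xb.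
have cW := Pl2 rW aL bL ab aW bW.
have csa := Pl2 rsa tL aL ta (addsmxSl _ _) (addsmxSr _ _).
have csb := Pl2 rsb tL bL tb (addsmxSl _ _) (addsmxSr _ _).
have Wab : (W <= a + b)%MS.
  by apply: eq_rk_sub; [rewrite addsmx_sub aW bW | rewrite rW rab].
have SWa : (t + W <= W + (t + a))%MS.
  by rewrite addsmx_sub addsmxSl andbT; apply: submx_trans (addsmxSr _ _); exact: addsmxSl.
have SWb : (t + W <= W + (t + b))%MS.
  by rewrite addsmx_sub addsmxSl andbT; apply: submx_trans (addsmxSr _ _); exact: addsmxSl.
have Sab : (t + W <= (t + a) + (t + b))%MS.
  rewrite addsmx_sub; apply/andP; split.
    by apply: submx_trans (addsmxSl _ _); exact: addsmxSl.
  apply: submx_trans Wab _; rewrite addsmx_sub; apply/andP; split.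
    by apply: submx_trans (addsmxSl _ _); exact: addsmxSr.
  by apply: submx_trans (addsmxSr _ _); exact: addsmxSr.
have r1 : \rank (W :&: (t + a))%MS <= 2.
  have := mxrankS SWa; rewrite rk_cap; slia.
have r2 : \rank (W :&: (t + b))%MS <= 2.
  have := mxrankS SWb; rewrite rk_cap; slia.
have r3 : \rank ((t + a) :&: (t + b))%MS <= 2.
  have := mxrankS Sab; rewrite rk_cap; slia.
set A := lines_in L W; set B := lines_in L (t + a)%MS; set C := lines_in L (t + b)%MS.
have AB : A :&: B \subset [set a].
  apply/subsetP=> x; rewrite !inE => /andP[/andP[xL xW] /andP[_ xta]].
  apply/eqP; apply: (line_uniq xL aL r1); rewrite sub_capmx ?xW ?xta ?aW //.
  by rewrite addsmxSr.
have ABC : (A :|: B) :&: C \subset [set b; t].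
  apply/subsetP=> x; rewrite !inE => /andP[/orP[] /andP[xL xW'] /andP[_ xtb]].
    apply/orP; left; apply/eqP; apply: (line_uniq xL bL r2); rewrite sub_capmx ?xW' ?xtb ?bW //.
    by rewrite addsmxSr.
  apply/orP; right; apply/eqP; apply: (line_uniq xL tL r3); rewrite sub_capmx ?xW' ?xtb //.
  by rewrite !addsmxSl.
have U : (A :|: B) :|: C \subset lines_in L (t + W)%MS.
  apply/subsetP=> x; rewrite !inE -!orbA => /orP[|/orP[]] /andP[-> xs] /=.
  - by apply: submx_trans xs (addsmxSr _ _).
  - apply: submx_trans xs _; rewrite addsmx_sub addsmxSl /=.
    by apply: submx_trans aW (addsmxSr _ _).
  - apply: submx_trans xs _; rewrite addsmx_sub addsmxSl /=.
    by apply: submx_trans bW (addsmxSr _ _).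
have := subset_leq_card U; have := Sd' rS.
have := subset_leq_card AB; have := subset_leq_card ABC.
rewrite cards1 cards2 eq_sym tb /=.
have := cardsU (A :|: B) C; have := cardsU A B.
rewrite cW csa csb; have := q2; slia.
Qed.

Variables (M l : mx) (hl : l \in L) (hlM : \rank (l :&: M)%MS = 1).
Local Notation P0 := (l :&: M)%MS.

Lemma nlM : ~~ (l <= M)%MS.
Proof.
apply/negP=> lM; have : (l <= P0)%MS by rewrite sub_capmx submx_refl lM.
move/mxrankS; rewrite hlM; have [_ ->] := lineL hl; by [].
Qed.

Lemma P0l : (P0 <= l)%MS. Proof. exact: capmxSl. Qed.
Lemma P0M : (P0 <= M)%MS. Proof. exact: capmxSr. Qed.

Definition TT := [set t in L | \rank (l :&: t)%MS == 0].
Definition LP := [set t in L | (P0 <= t)%MS].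

Lemma card_LP : #|LP| = q.+1.
Proof.
case: (Pt' hlM) => // h0.
have : 0 < #|LP| by apply/card_gt0P; exists l; rewrite inE hl P0l.
by rewrite /LP h0.
Qed.

Lemma T_LP : #|TT| + q.+1 <= #|L|.
Proof.
have d : TT :&: LP = set0.
  apply/setP=> t; rewrite !inE; apply/negP=> /andP[/andP[_ /eqP h] /andP[_ Pt0]].
  have := cap_ge1 hlM P0l Pt0; rewrite h.
  by [].
have := cardsU TT LP; rewrite d cards0 card_LP subn0 => <-.
apply: subset_leq_card; apply/subsetP=> t; rewrite !inE => /orP[] /andP[] //.
Qed.

Lemma meetP0 (x : mx) : (x <= M)%MS -> 0 < \rank (l :&: x)%MS -> (P0 <= x)%MS.
Proof.
move=> xM h; have s1 : (l :&: x <= P0)%MS.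
  by rewrite sub_capmx capmxSl /=; apply: submx_trans (capmxSr _ _) xM.
have : (P0 <= l :&: x)%MS by apply: eq_rk_sub => //; rewrite hlM.
by move/submx_trans; apply; exact: capmxSr.
Qed.

Definition LMp := [set m in L | (m <= M)%MS && ~~ (P0 <= m)%MS].

Lemma LMp_T m : m \in LMp -> m \in TT.
Proof.
rewrite !inE => /andP[mL /andP[mM nP]]; rewrite mL /=.
by apply: contraR nP; rewrite -lt0n; exact: meetP0.
Qed.

Definition Sol (x : mx) := <<(l + x)%MS>>%MS.

Lemma TT_L t : t \in TT -> t \in L. Proof. by rewrite inE => /andP[]. Qed.

Lemma rank_Sol t : t \in TT -> \rank (Sol t) = 4.
Proof.
move=> tT; have := tT; rewrite inE => /andP[tL /eqP h0].
have [_ rt] := lineL tL; have [_ rl] := lineL hl.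
rewrite /Sol mxrank_gen rk_sum h0 rt rl; by [].
Qed.

Lemma l_Sol t : (l <= Sol t)%MS. Proof. by rewrite /Sol genmxE addsmxSl. Qed.
Lemma t_Sol t : (t <= Sol t)%MS. Proof. by rewrite /Sol genmxE addsmxSr. Qed.

Lemma Sol_eq t m : t \in TT -> m \in TT -> (t <= Sol m)%MS -> Sol t = Sol m.
Proof.
move=> tT mT tS; apply: canon_eq; rewrite ?/Sol ?genmx_id //.
  by rewrite genmxE addsmx_sub -/(Sol m) l_Sol tS.
by rewrite -/(Sol m) -/(Sol t) (rank_Sol tT) (rank_Sol mT).
Qed.

Lemma rank_lx x : x \in TT -> \rank (l + x)%MS = 4.
Proof. by move=> xT; rewrite -(rank_Sol xT) /Sol mxrank_gen. Qed.

Lemma skew_not_plane x (Z : mx) : x \in TT -> (l <= Z)%MS -> \rank Z <= 3 -> ~~ (x <= Z)%MS.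
Proof.
move=> xT lZ rZ; apply/negP=> xZ.
have : (l + x <= Z)%MS by rewrite addsmx_sub lZ xZ.
by move/mxrankS; rewrite (rank_lx xT); move: rZ; slia.
Qed.

Lemma plane_l t : t \in L -> t != l -> 0 < \rank (l :&: t)%MS -> \rank (l + t)%MS = 3.
Proof.
move=> tL tl h; have [_ rt] := lineL tL; have [_ rl] := lineL hl.
have lt : l != t by rewrite eq_sym.
have h2 := cap_line_le1 hl (line_neq_sub hl tL lt).
by rewrite rk_sum rt rl; move: h h2; slia.
Qed.

Lemma SolidT m0 : m0 \in LMp -> q <= #|[set t in TT | Sol t == Sol m0]|.
Proof.
move=> m0M; have m0T := LMp_T m0M.
have := m0M; rewrite inE => /andP[m0L /andP[m0Mx _]].
set S := Sol m0; have rS : \rank S = 4 := rank_Sol m0T.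
have lS : (l <= S)%MS := l_Sol m0; have m0S : (m0 <= S)%MS := t_Sol m0.
have lm0 : l != m0 by apply: contraNneq nlM => ->.
set LS := lines_in L S.
have h2 : 1 < #|LS| by apply: (card2_sub (a := l) (b := m0)); rewrite ?inE ?hl ?m0L ?lS ?m0S.
have hS1 := Sd2 rS h2.
set Sk := [set t in LS | \rank (l :&: t)%MS == 0].
have SkT : Sk \subset [set t in TT | Sol t == S].
  apply/subsetP=> t; rewrite !inE => /andP[/andP[tL tS] h0].
  have tT : t \in TT by rewrite inE tL h0.
  by rewrite tL h0 /=; apply/eqP; apply: Sol_eq.
apply: leq_trans (subset_leq_card SkT).
case: (pickP (fun t => (t \in LS) && (t != l) && (0 < \rank (l :&: t)%MS)))=> [t|none].
  move=> /andP[/andP[tLS tl] tpos]; have := tLS; rewrite inE => /andP[tL tS].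
  set sg := (l + t)%MS; have rsg : \rank sg = 3 := plane_l tL tl tpos.
  have sgS : (sg <= S)%MS by rewrite addsmx_sub lS tS.
  have csg : #|lines_in L sg| = q.+1.
    by apply: (Pl2 rsg hl tL); rewrite ?addsmxSl ?addsmxSr // eq_sym.
  have m0sg : ~~ (m0 <= sg)%MS by apply: skew_not_plane; rewrite ?addsmxSl ?rsg.
  have sgLS : lines_in L sg \subset LS.
    by apply/subsetP=> x; rewrite !inE => /andP[-> /submx_trans]; apply.
  have big : q.+1 < #|LS|.
    have : (m0 |: lines_in L sg) \subset LS.
      by apply/subsetP=> x; rewrite in_setU1 => /orP[/eqP ->|/(subsetP sgLS)//]; rewrite inE m0L m0S.
    move/subset_leq_card; rewrite cardsU1 inE m0L /= (negbTE m0sg) csg; slia.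
  have cLS := Sd3 rS big.
  have cov : LS \subset Sk :|: lines_in L sg.
    apply/subsetP=> x xLS; have := xLS; rewrite inE => /andP[xL xS].
    rewrite !inE xL xS /=.
    apply/orP; have [h0|hpos] := boolP (\rank (l :&: x)%MS == 0); [by left | right].
    apply: contraT => xsg; exfalso.
    have xl : x != l by apply: contraNneq xsg => ->; rewrite addsmxSl.
    have xpos : 0 < \rank (l :&: x)%MS by rewrite lt0n.
    set sg' := (l + x)%MS; have rsg' : \rank sg' = 3 := plane_l xL xl xpos.
    have csg' : #|lines_in L sg'| = q.+1.
      by apply: (Pl2 rsg' hl xL); rewrite ?addsmxSl ?addsmxSr // eq_sym.
    have m0sg' : ~~ (m0 <= sg')%MS by apply: skew_not_plane; rewrite ?addsmxSl ?rsg'.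
    have r4 : 3 < \rank (sg + sg')%MS.
      rewrite ltnNge; apply: contra xsg => hr.
      have : (sg + sg' <= sg)%MS by apply: eq_rk_sub; [exact: addsmxSl | rewrite rsg].
      apply: submx_trans; apply: submx_trans (addsmxSr _ _); exact: addsmxSr.
    have rc : \rank (sg :&: sg')%MS <= 2 by rewrite rk_cap rsg rsg'; move: r4; slia.
    have I1 : lines_in L sg :&: lines_in L sg' \subset [set l].
      apply/subsetP=> y; rewrite !inE => /andP[/andP[yL ys] /andP[_ ys']].
      apply/eqP; apply: (line_uniq yL hl rc); rewrite sub_capmx ?ys ?ys' //.
      by rewrite !addsmxSl.
    have sg'S : (sg' <= S)%MS by rewrite addsmx_sub lS xS.
    have U : m0 |: (lines_in L sg :|: lines_in L sg') \subset LS.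
      apply/subsetP=> y; rewrite !inE => /orP[/eqP ->|/orP[] /andP[-> ys]]; rewrite ?m0L ?m0S //=.
        exact: submx_trans ys sgS.
      exact: submx_trans ys sg'S.
    move/subset_leq_card: U; rewrite cardsU1 !inE m0L /= (negbTE m0sg) (negbTE m0sg') /=.
    have := subset_leq_card I1; rewrite cards1.
    have := cardsU (lines_in L sg) (lines_in L sg'); rewrite csg csg' cLS.
    have := q2; slia.
  have := subset_leq_card cov; have := cardsU Sk (lines_in L sg).
  rewrite cLS csg; slia.
have cov : LS \subset Sk :|: [set l].
  apply/subsetP=> x xLS; rewrite in_setU in_set1 orbC.
  have [->|xl] := eqVneq x l; first by [].
  rewrite /= inE xLS /=.
  have := none x; rewrite /= xLS xl /= lt0n.
  by move/negbFE.
have := subset_leq_card cov; have := cardsU Sk [set l]; rewrite cards1; slia.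
Qed.


Lemma cnt2 (pi C P : mx) (X : {set mx}) : \rank pi = 3 -> \rank C = 1 -> \rank P = 1 ->
  (C <= pi)%MS -> (P <= pi)%MS -> ~~ (P <= C)%MS -> X \subset L -> #|X| = q.+1 ->
  (forall x, x \in X -> (C <= x)%MS && (x <= pi)%MS) -> exists2 x, x \in X & (P <= x)%MS.
Proof.
move=> rpi rC rP Cpi Ppi nPC XL cX hX.
have rCP : \rank (C + P)%MS = 2.
  by rewrite addsmxC rk_sum (r1_cap0 rP nPC) rP rC.
have : ~~ (pi <= C + P)%MS by apply/negP=> /mxrankS; rewrite rpi rCP.
case/row_subPn=> i hi; set w := row i pi in hi.
have wpi : (w <= pi)%MS := row_sub i pi.
have nwP : ~~ (w <= P)%MS by apply: contra hi => /submx_trans; apply; exact: addsmxSr.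
have nzw : w != 0%R by apply: contraNneq nwP => ->; rewrite sub0mx.
have rw : \rank w = 1 by rewrite rank_rV nzw.
set r := (P + w)%MS.
have rr : \rank r = 2.
  by rewrite /r rk_sum capmxC (r1_cap0 rw nwP) rP rw.
have rpi' : (r <= pi)%MS by rewrite addsmx_sub Ppi wpi.
have nCr : ~~ (C <= r)%MS.
  apply/negP=> Cr; have : (C + P <= r)%MS by rewrite addsmx_sub Cr addsmxSl.
  move=> CPr; have : (r <= C + P)%MS by apply: eq_rk_sub => //; rewrite rr rCP.
  move=> rCP'; have : (w <= C + P)%MS by apply: submx_trans rCP'; exact: addsmxSr.
  by rewrite (negbTE hi).
pose h (x : mx) := <<(x :&: r)%MS>>%MS.
have rxr : forall x, x \in X -> \rank (x :&: r)%MS = 1.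
  move=> x xX; have /andP[Cx xpi] := hX x xX; have [_ rx] := lineL (subsetP XL x xX).
  have h1 : \rank (x + r)%MS <= 3 by rewrite -rpi mxrankS // addsmx_sub xpi rpi'.
  have h2 : \rank (x :&: r)%MS <= 1.
    rewrite leqNgt; apply/negP=> h2; apply/negP: nCr; apply/negPn.
    have : (x <= x :&: r)%MS by apply: eq_rk_sub; [exact: capmxSl | rewrite rx].
    move=> xxr; apply: submx_trans Cx _; apply: submx_trans xxr _; exact: capmxSr.
  by move: h2; rewrite rk_cap rx rr; move: h1; slia.
have hpts : forall x, x \in X -> h x \in [set Y in pg_points F n | (Y <= r)%MS].
  move=> x xX; rewrite inE in_pts /h genmx_id mxrank_gen (rxr x xX) !eqxx /=.
  by rewrite genmxE capmxSr.
have hinj : {in X &, injective h}.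
  move=> x x' xX x'X /genmxP /andP[s1 s2].
  have /andP[Cx _] := hX x xX; have /andP[Cx' _] := hX x' x'X.
  have xL := subsetP XL x xX; have x'L := subsetP XL x' x'X.
  have [_ rx] := lineL xL; have [_ rx'] := lineL x'L.
  set Y := (x :&: r)%MS.
  have nCY : ~~ (C <= Y)%MS by apply: contra nCr => /submx_trans; apply; exact: capmxSr.
  have rCY : \rank (C + Y)%MS = 2 by rewrite rk_sum (r1_cap0 rC nCY) rC (rxr x xX).
  have CYx : (C + Y <= x)%MS by rewrite addsmx_sub Cx capmxSl.
  have CYx' : (C + Y <= x')%MS.
    by rewrite addsmx_sub Cx' /=; apply: submx_trans s1 _; exact: capmxSl.
  apply: (line_uniq xL x'L (Z := (C + Y)%MS)); rewrite ?rCY //.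
    by apply: eq_rk_sub => //; rewrite rx rCY.
  by apply: eq_rk_sub => //; rewrite rx' rCY.
have sub : h @: X \subset [set Y in pg_points F n | (Y <= r)%MS].
  by apply/subsetP=> y /imsetP[x xX ->]; exact: hpts.
have eqs : h @: X = [set Y in pg_points F n | (Y <= r)%MS].
  apply/eqP; rewrite eqEcard sub (card_in_imset hinj) cX.
  exact: pts_on_line hq rr.
have : <<P>>%MS \in h @: X.
  by rewrite eqs inE in_pts genmx_id mxrank_gen rP !eqxx genmxE addsmxSl.
case/imsetP=> x xX /genmxP /andP[Px _]; exists x => //.
by move: Px => /submx_trans; apply; exact: capmxSl.
Qed.

Lemma pencil m1 m2 : m1 \in LMp -> m2 \in LMp -> m1 != m2 -> Sol m1 = Sol m2 ->
  \rank (Sol m1 :&: M)%MS = 3 /\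
  exists C : mx, [/\ \rank C = 1,
     [set t in L | (C <= t)%MS] \subset lines_in L (Sol m1 :&: M)%MS,
     #|[set t in L | (C <= t)%MS]| = q.+1 &
     exists2 x, x \in [set t in L | (C <= t)%MS] & (P0 <= x)%MS].
Proof.
move=> m1M m2M m12 e.
have := m1M; rewrite inE => /andP[m1L /andP[m1Mx nP1]].
have := m2M; rewrite inE => /andP[m2L /andP[m2Mx nP2]].
set S := Sol m1; set pi := (S :&: M)%MS.
have m1S : (m1 <= S)%MS := t_Sol m1.
have m2S : (m2 <= S)%MS by rewrite /S e; exact: t_Sol.
have m1pi : (m1 <= pi)%MS by rewrite sub_capmx m1S m1Mx.
have m2pi : (m2 <= pi)%MS by rewrite sub_capmx m2S m2Mx.
have P0pi : (P0 <= pi)%MS.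
  by rewrite sub_capmx P0M andbT; apply: submx_trans P0l (l_Sol m1).
have [_ r1] := lineL m1L; have [_ r2] := lineL m2L.
have rpi : \rank pi = 3.
  have h1 : \rank (P0 + m1)%MS = 3 by rewrite rk_sum (r1_cap0 hlM nP1) hlM r1.
  have h2 : 3 <= \rank pi by rewrite -h1 mxrankS // addsmx_sub P0pi m1pi.
  have h3 : \rank pi <= 3.
    rewrite leqNgt; apply/negP=> h4.
    have : (S <= pi)%MS.
      by apply: eq_rk_sub; [exact: capmxSl | rewrite (rank_Sol (LMp_T m1M)); move: h4; slia].
    move=> Spi; apply/negP: nlM; apply/negPn.
    apply: submx_trans (l_Sol m1) _; apply: submx_trans Spi _; exact: capmxSr.
  by move: h2 h3; slia.
set C := (m1 :&: m2)%MS.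
have rC : \rank C = 1.
  have h1 : \rank (m1 + m2)%MS <= 3 by rewrite -rpi mxrankS // addsmx_sub m1pi m2pi.
  have h2 := cap_line_le1 m1L (line_neq_sub m1L m2L m12).
  by move: h2; rewrite /C rk_cap r1 r2; move: h1; slia.
have Cm1 : (C <= m1)%MS := capmxSl _ _.
have Cm2 : (C <= m2)%MS := capmxSr _ _.
have LCpi : [set t in L | (C <= t)%MS] \subset lines_in L pi.
  apply/subsetP=> t; rewrite !inE => /andP[tL Ct]; rewrite tL /=.
  apply: contraT => tpi; exfalso.
  exact: (pen rpi m1L m2L m12 m1pi m2pi rC Cm1 Cm2 tL Ct tpi).
have cLC : #|[set t in L | (C <= t)%MS]| = q.+1.
  case: (Pt' rC) => // h0.
  have : 0 < #|[set t in L | (C <= t)%MS]| by apply/card_gt0P; exists m1; rewrite inE m1L Cm1.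
  by rewrite h0.
split => //; exists C; split => //.
have nPC : ~~ (P0 <= C)%MS by apply: contra nP1 => /submx_trans; apply.
apply: (cnt2 rpi rC hlM _ P0pi nPC) => //.
- exact: submx_trans Cm1 m1pi.
- by apply/subsetP=> t; rewrite inE => /andP[].
- move=> x xX; have := xX; rewrite inE => /andP[_ ->] /=.
  by have := subsetP LCpi x xX; rewrite inE => /andP[].
Qed.

Definition fib (S : mx) := [set m in LMp | Sol m == S].
Definition TS (S : mx) := [set t in TT | Sol t == S].

Lemma in_fib m S : (m \in fib S) = (m \in LMp) && (Sol m == S).
Proof. exact: in_set. Qed.
Lemma in_TS m S : (m \in TS S) = (m \in TT) && (Sol m == S).
Proof. exact: in_set. Qed.

Lemma sumB (g : mx -> nat) :
  (forall m0, m0 \in LMp -> q * #|fib (Sol m0)| <= #|TS (Sol m0)| + g (Sol m0)) ->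
  q * #|LMp| <= #|TT| + \sum_(S in Sol @: LMp) g S.
Proof.
move=> hg.
have e1 : #|LMp| = \sum_(S in Sol @: LMp) #|fib S|.
  rewrite sum_fiber; apply: eq_card => m; rewrite inE.
  by case mL: (m \in LMp); rewrite //= imset_f.
have e2 : \sum_(S in Sol @: LMp) #|TS S| <= #|TT|.
  rewrite /TS sum_fiber; apply: subset_leq_card; apply/subsetP=> t; rewrite inE => /andP[].
  by [].
rewrite e1 big_distrr /=.
apply: leq_trans (_ : \sum_(S in Sol @: LMp) (#|TS S| + g S) <= _).
  by apply: leq_sum => S /imsetP[m0 m0M ->]; exact: hg.
by rewrite big_split /= leq_add2r.
Qed.

Lemma fib_le1 (Ha : forall s, s \in lines_in L M -> \rank (l :&: s)%MS = 0) m0 :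
  m0 \in LMp -> #|fib (Sol m0)| <= 1.
Proof.
move=> m0M; rewrite leqNgt; apply/negP => /card_gt1P [m1 [m2 []]].
rewrite !in_fib => /andP[m1M /eqP e1] /andP[m2M /eqP e2] m12.
have [_ [C [rC LCpi cLC [x xLC Px]]]] := pencil m1M m2M m12 (etrans e1 (esym e2)).
have := subsetP LCpi x xLC; rewrite !inE => /andP[xL xpi].
have xM : (x <= M)%MS by apply: submx_trans xpi (capmxSr _ _).
have := Ha x; rewrite inE xL xM => /(_ isT) h0.
by have := cap_ge1 hlM P0l Px; rewrite h0.
Qed.

Lemma partA (Ha : forall s, s \in lines_in L M -> \rank (l :&: s)%MS = 0) :
  q * #|lines_in L M| + 1 <= #|L|.
Proof.
have eLM : lines_in L M = LMp.
  apply/setP=> m; rewrite !inE; case mL: (m \in L) => //=.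
  case mM: (m <= M)%MS => //=; apply/esym/negP=> Pm.
  have := Ha m; rewrite inE mL mM => /(_ isT) h0.
  by have := cap_ge1 hlM P0l Pm; rewrite h0.
have hs : q * #|LMp| <= #|TT| + \sum_(S in Sol @: LMp) 0.
  apply: sumB => m0 m0M; rewrite addn0.
  have h1 : q <= #|TS (Sol m0)| := SolidT m0M.
  move: (fib_le1 Ha m0M) h1; case: (#|fib (Sol m0)|) => [|[|k]]; slia.
rewrite big1_eq addn0 in hs; rewrite eLM.
have := T_LP; move: hs; slia.
Qed.

Section PartB.
Variables (s : mx) (hs : s \in lines_in L M) (hsl : 0 < \rank (l :&: s)%MS).

Lemma sL : s \in L. Proof. by move: hs; rewrite inE => /andP[]. Qed.
Lemma sM : (s <= M)%MS. Proof. by move: hs; rewrite inE => /andP[]. Qed.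
Lemma P0s : (P0 <= s)%MS. Proof. exact: meetP0 sM hsl. Qed.

Lemma uniqs x : x \in L -> (x <= M)%MS -> (P0 <= x)%MS -> x = s.
Proof.
move=> xL xM Px; apply/eqP; apply: contraT => xs.
have [_ r3] := two_lines_rank xL sL xs hlM Px P0s.
have nl : ~~ (l <= x + s)%MS.
  by apply: contra nlM => /submx_trans; apply; rewrite addsmx_sub xM sM.
case: (pen r3 xL sL xs (addsmxSl _ _) (addsmxSr _ _) hlM Px P0s hl P0l nl).
Qed.

Lemma LM_le : #|lines_in L M| <= #|LMp| + 1.
Proof.
have : lines_in L M \subset s |: LMp.
  apply/subsetP=> m; rewrite inE => /andP[mL mM]; rewrite in_setU1.
  case Pm: (P0 <= m)%MS; first by rewrite (uniqs mL mM Pm) eqxx.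
  by rewrite orbC inE mL mM Pm.
move/subset_leq_card; rewrite cardsU1; slia.
Qed.

Definition Qs := [set P | qM_point q L M P & (P <= s)%MS].

Lemma fib_big m0 : m0 \in LMp -> 1 < #|fib (Sol m0)| ->
  #|fib (Sol m0)| <= q /\
  exists2 C, C \in Qs & lines_through L C \subset lines_in L (Sol m0).
Proof.
move=> m0M /card_gt1P [m1 [m2 []]].
rewrite !in_fib => /andP[m1M /eqP e1] /andP[m2M /eqP e2] m12.
have [rpi [C [rC LCpi cLC [x xLC Px]]]] := pencil m1M m2M m12 (etrans e1 (esym e2)).
have := subsetP LCpi x xLC; rewrite inE => /andP[xL xpi].
have xM : (x <= M)%MS by apply: submx_trans xpi (capmxSr _ _).
have xs := uniqs xL xM Px; subst x.
split.
  have sub : fib (Sol m0) \subset lines_in L (Sol m1 :&: M)%MS :\ s.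
    apply/subsetP=> m; rewrite in_fib => /andP[mM /eqP em].
    have := mM; rewrite inE => /andP[mL /andP[mMx nPm]].
    rewrite !inE mL /=; apply/andP; split.
      by apply: contraNneq nPm => ->; exact: P0s.
    by rewrite sub_capmx mMx andbT e1 -em; exact: t_Sol.
  have := subset_leq_card sub; have := cardsD1 s (lines_in L (Sol m1 :&: M)%MS).
  have sin : s \in lines_in L (Sol m1 :&: M)%MS by rewrite inE sL xpi.
  rewrite sin.
  have := Pl' rpi; rewrite !inE => /or3P[] /eqP ->; slia.
exists <<C>>%MS.
  rewrite inE /qM_point in_pts genmx_id mxrank_gen rC !eqxx /= genmxE.
  have Cs : (C <= s)%MS by move: xLC; rewrite inE => /andP[].
  rewrite Cs andbT.
  have -> : lines_in (lines_through L <<C>>%MS) M = [set t in L | (C <= t)%MS].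
    apply/setP=> t; rewrite !inE genmxE; case tL: (t \in L); case Ct: (C <= t)%MS => //=.
    have := subsetP LCpi t; rewrite !inE tL Ct => /(_ isT) tpi.
    exact: submx_trans tpi (capmxSr _ _).
  by rewrite cLC.
apply/subsetP=> t; rewrite !inE genmxE => /andP[tL Ct].
have := subsetP LCpi t; rewrite !inE tL Ct => /(_ isT) tpi /=.
by apply: submx_trans tpi _; rewrite -e1; exact: capmxSl.
Qed.

Lemma Qs_det C S S' : C \in Qs -> S \in Sol @: LMp -> S' \in Sol @: LMp ->
  lines_through L C \subset lines_in L S -> lines_through L C \subset lines_in L S' -> S = S'.
Proof.
rewrite inE /qM_point in_pts => /andP[/andP[/andP[/eqP cC /eqP rC] /eqP cq] _].
move=> /imsetP[m0 m0M ->] /imsetP[m0' m0M' ->] h h'.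
set LT := lines_through L C.
have sLT : lines_in LT M \subset LT by apply/subsetP=> t; rewrite inE => /andP[].
have cLT : #|LT| = q.+1.
  have CP : C \in pg_points F n by rewrite in_pts cC rC !eqxx.
  have := subset_leq_card sLT; rewrite cq.
  by case: (Pt CP) => ->.
have eLT : lines_in LT M = LT by apply/eqP; rewrite eqEcard sLT cLT cq leqnn.
have : 1 < #|LT| by rewrite cLT; have := q2; slia.
case/card_gt1P=> m1 [m2 [m1T m2T m12]].
have := m1T; rewrite -eLT inE => /andP[]; rewrite inE => /andP[m1L Cm1] m1M.
have := m2T; rewrite -eLT inE => /andP[]; rewrite inE => /andP[m2L Cm2] m2M.
have [_ r12] := two_lines_rank m1L m2L m12 rC Cm1 Cm2.
have [_ rl] := lineL hl.
set Z := (l + (m1 + m2))%MS.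
have rZ : 4 <= \rank Z.
  have h1 : (l :&: (m1 + m2) <= P0)%MS.
    by rewrite sub_capmx capmxSl /=; apply: submx_trans (capmxSr _ _) _; rewrite addsmx_sub m1M m2M.
  have := mxrankS h1; rewrite hlM /Z rk_sum rl r12; slia.
have ZS : forall m, m \in LMp -> LT \subset lines_in L (Sol m) -> (Sol m <= Z)%MS.
  move=> m mM hm; apply: eq_rk_sub; last by rewrite (rank_Sol (LMp_T mM)).
  rewrite /Z addsmx_sub l_Sol addsmx_sub.
  have := subsetP hm m1 m1T; have := subsetP hm m2 m2T; rewrite !inE => /andP[_ ->] /andP[_ ->].
  by [].
have SZ : forall m, m \in LMp -> LT \subset lines_in L (Sol m) -> (Z <= Sol m)%MS.
  move=> m mM hm.
  have := subsetP hm m1 m1T; have := subsetP hm m2 m2T; rewrite !inE => /andP[_ a2] /andP[_ a1].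
  by rewrite /Z addsmx_sub l_Sol addsmx_sub a1 a2.
apply: canon_eq; rewrite ?/Sol ?genmx_id //.
  exact: submx_trans (ZS _ m0M h) (SZ _ m0M' h').
rewrite -/(Sol m0) -/(Sol m0') (rank_Sol (LMp_T m0M)) (rank_Sol (LMp_T m0M')).
by [].
Qed.

Lemma pencil_card : #|[set S in Sol @: LMp | 1 < #|fib S|]| <= #|Qs|.
Proof.
set PS := [set S in Sol @: LMp | 1 < #|fib S|].
pose f (S : mx) := odflt 0%R [pick C | (C \in Qs) && (lines_through L C \subset lines_in L S)].
have hf : forall S, S \in PS -> (f S \in Qs) && (lines_through L (f S) \subset lines_in L S).
  move=> S; rewrite inE => /andP[/imsetP[m0 m0M ->] h1].
  have [_ [C CQ CS]] := fib_big m0M h1.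
  rewrite /f; case: pickP => [C' //|none].
  by have := none C; rewrite CQ CS.
have inj : {in PS &, injective f}.
  move=> S S' SP S'P e.
  have /andP[fQ fS] := hf S SP; have /andP[_ fS'] := hf S' S'P.
  have := SP; rewrite inE => /andP[SB _]; have := S'P; rewrite inE => /andP[S'B _].
  by apply: (Qs_det fQ SB S'B fS); rewrite e.
rewrite -(card_in_imset inj); apply: subset_leq_card.
by apply/subsetP=> C /imsetP[S SP ->]; have /andP[] := hf S SP.
Qed.

Lemma alpha_le : #|Qs| <= q.
Proof.
have [_ rs] := lineL sL.
have inPS : forall Y, (Y \in [set Y in pg_points F n | (Y <= s)%MS]) = (Y \in pg_points F n) && (Y <= s)%MS.
  by move=> Y; exact: in_set.
have sub : Qs \subset [set Y in pg_points F n | (Y <= s)%MS] :\ <<P0>>%MS.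
  apply/subsetP=> C; rewrite inE => /andP[qC Cs]; have := qC.
  rewrite /qM_point => /andP[CP cq]; rewrite in_setD1 inPS CP Cs andbT /=.
  rewrite andbT; move: cq; apply: contraTneq => ->.
  have e : lines_through L <<P0>>%MS = LP by apply/setP=> t; rewrite !inE genmxE.
  rewrite e; apply/negP => /eqP c1.
  have : lines_in LP M = LP.
    apply/eqP; rewrite eqEcard c1 card_LP leqnn andbT.
    by apply/subsetP=> t; rewrite inE => /andP[].
  move/setP/(_ l); rewrite !inE hl P0l /= => lM.
  by have := nlM; rewrite lM.
have := subset_leq_card sub.
have := cardsD1 (<<P0>>%MS) [set Y in pg_points F n | (Y <= s)%MS].
rewrite inPS in_pts genmx_id mxrank_gen hlM !eqxx genmxE P0s /=.
have := pts_on_line hq rs; slia.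
Qed.

Lemma partB : q * #|lines_in L M| + 1 <= #|L| + #|Qs| * (q * q - q).
Proof.
pose g (S : mx) := if 1 < #|fib S| then q * q - q else 0.
have hsum := @sumB g.
have : q * #|LMp| <= #|TT| + \sum_(S in Sol @: LMp) g S.
  apply: hsum => m0 m0M; have h1 : q <= #|TS (Sol m0)| := SolidT m0M.
  rewrite /g; case: ifP => h2.
    have [h3 _] := fib_big m0M h2.
    have : q * #|fib (Sol m0)| <= q * q by rewrite leq_mul2l h3 orbT.
    move: h1 (q2); slia.
  move: h1; move/negbT: h2; rewrite -leqNgt; case: (#|fib (Sol m0)|) => [|[|k]]; slia.
have eg : \sum_(S in Sol @: LMp) g S = #|[set S in Sol @: LMp | 1 < #|fib S|]| * (q * q - q).
  rewrite -sum_nat_const (bigID (fun S => 1 < #|fib S|)) /= [X in _ + X]big1; last first.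
    by move=> S /andP[_ /negbTE h]; rewrite /g h.
  rewrite addn0; apply: eq_big => [S|S /andP[_ h]]; first by rewrite !inE.
  by rewrite /g h.
rewrite eg => h.
have e1 : q * #|lines_in L M| <= q * #|LMp| + q.
  by rewrite -[X in _ + X]muln1 -mulnDr leq_mul2l LM_le orbT.
have e2 : #|[set S in Sol @: LMp | 1 < #|fib S|]| * (q * q - q) <= #|Qs| * (q * q - q).
  by rewrite leq_mul2r pencil_card orbT.
have := T_LP; move: h e1 e2; slia.
Qed.

End PartB.

End Main.

Unset Implicit Arguments.

Theorem proposition3 (F : finFieldType) (n q : nat) (hq : #|F| = q)
  (L : {set 'M[F]_(n.+1)})
  (Lsub : L \subset pg_lines F n)
  (Lne : L != set0)
  (Pt : forall P, P \in pg_points F n ->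
          #|lines_through L P| = 0 \/ #|lines_through L P| = q.+1)
  (Pl : forall W, W \in pg_planes F n ->
          #|lines_in L W| \in [:: 0; 1; q.+1])
  (Sd : forall W, W \in pg_solids F n ->
          #|lines_in L W| \in [:: 0; 1; q.+1; (2 * q).+1])
  (To : #|L| <= q ^ 5 + q ^ 4 + q ^ 3 + q ^ 2 + q + 1)
  (M : 'M[F]_(n.+1)) (l : 'M[F]_(n.+1))
  (hl : l \in L) (hlM : \rank (l :&: M)%MS = 1) :
  ((forall s, s \in lines_in L M -> \rank (l :&: s)%MS = 0) ->
     q * #|lines_in L M| + 1 <= #|L|)
  /\
  (forall (s : 'M[F]_(n.+1)) (alpha : nat),
     s \in lines_in L M -> 0 < \rank (l :&: s)%MS ->
     #|[set P | qM_point q L M P & (P <= s)%MS]| = alpha ->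
     (Posz (q * #|lines_in L M|) - Posz (alpha * q ^ 2) + Posz (alpha * q) + 1
        <= Posz #|L|)%R /\
     (Posz (q * #|lines_in L M|) - Posz (q ^ 3) + Posz (q ^ 2) + 1
        <= Posz (q * #|lines_in L M|) - Posz (alpha * q ^ 2) + Posz (alpha * q) + 1)%R).
Proof.
split; first exact: (partA hq Lsub Pt Pl Sd hl hlM).
move=> s alpha hs hsl ha.
have hB := partB hq Lsub Pt Pl Sd hl hlM hs hsl.
have hal := alpha_le hq Lsub Pt hl hlM hs hsl.
have q2' := q2 hq.
move: hB hal; rewrite /Qs ha => hB hal.
move: (#|lines_in L M|) (#|L|) hB => a b hB.
have e : alpha * (q * q - q) = alpha * (q * q) - alpha * q by rewrite mulnBr.
rewrite e in hB.
have h1 : alpha * q <= alpha * (q * q) by rewrite leq_mul2l leq_pmulr ?orbT //; lia.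
have h2 : alpha * (q * q) <= q * (q * q) by rewrite leq_mul2r hal orbT.
have h3 : alpha * q <= q * q by rewrite leq_mul2r hal orbT.
have h4 : alpha * (q * q) - alpha * q <= q * (q * q) - q * q.
  by rewrite -!mulnBr leq_mul2r hal orbT.
have h5 : q * q <= q * (q * q) by rewrite leq_pmull // ltnW.
rewrite !expnS expn0 !muln1.
split; clear -hB h1 h2 h3 h4 h5 hal q2'; lia.
Qed.
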